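(* For all non-negative integers $p$ and $r$, $$H_{r,p+1/2}=\frac{1}{2^{2r-1}}\binom{2p}{p}^{-1}\binom{2(r+p)}{r+p}\binom{r+p}{r}\left(O_{r+p}-O_p\right).$$
   Context: For complex $x$ not a negative integer, $H_x=\sum_{k\ge1}\left(\frac1k-\frac1{k+x}\right)$, and for complex $x$, $\binom{x}{k}=\frac{x(x-1)\cdots(x-k+1)}{k!}$. Hyperharmonic numbers: for integer $n\ge0$ and complex $q$ with $q-1$ not a negative integer (i.e. $q\notin\{0,-1,-2,\dots\}$), $H_{n,q}=\binom{n+q-1}{n}\left(H_{n+q-1}-H_{q-1}\right)$; also $H_{n,0}=\frac1n$ for $n\ge1$. Equivalently $\sum_{n\ge0}H_{n,q}z^n=\frac{-\ln(1-z)}{(1-z)^q}$, so $H_{0,q}=0$, $H_{n,1}=H_n$, and $H_{n,q}=\sum_{i=1}^nH_{i,q-1}$. The odd harmonic numbers are $O_n=\sum_{k=1}^n\frac{1}{2k-1}$, $O_0=0$. *)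

(* Defs.v *)
From HB Require Import structures.
From mathcomp Require Import all_boot all_order all_algebra.
From mathcomp Require Import all_classical all_reals all_analysis.
Set Implicit Arguments. Unset Strict Implicit. Unset Printing Implicit Defensive.
Import Order.TTheory GRing.Theory Num.Theory.
Import numFieldNormedType.Exports.
Local Open Scope ring_scope.

(* Generalized harmonic number H_x = sum_{k>=1} (1/k - 1/(k+x)), for real x
   (not a negative integer); defined as the limit of the partial sums. *)
Definition harm {R : realType} (x : R) : R :=
  limn (series ((fun k : nat => (k.+1%:R)^-1 - (k.+1%:R + x)^-1) : R^nat)).

Definition gbinom {R : realType} (x : R) (k : nat) : R :=
  (\prod_(i < k) (x - i%:R)) / (k`!)%:R.

Definition hyperH {R : realType} (n : nat) (q : R) : R :=
  gbinom (n%:R + q - 1) n * (harm (n%:R + q - 1) - harm (q - 1)).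

Definition oddH {R : realType} (n : nat) : R :=
  \sum_(1 <= k < n.+1) ((2 * k - 1)%N%:R)^-1.

(* Main.v *)
Require Import Defs.
From HB Require Import structures.
From mathcomp Require Import all_boot all_order all_algebra.
From mathcomp Require Import all_classical all_reals all_analysis.
Import Order.TTheory GRing.Theory Num.Theory.
Local Open Scope ring_scope.
Import numFieldNormedType.Exports.
From mathcomp Require Import ring lra zify.

Section S.
Local Open Scope classical_set_scope.

Variable R : realType.

Lemma e0 (c : R) : (fun N : nat => (N%:R + c)^-1) @ \oo --> 0.
Proof.
have H : (fun N : nat => N%:R + c) @ \oo --> +oo.
  apply/cvgryPge => A.
  have := @cvgr_idn R; move/cvgryPge => /(_ (A - c)).
  apply: filterS => N; by rewrite lerBlDr.
have Hp : \forall N \near \oo, 0 < (fun N : nat => (N%:R + c)^-1) N.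
  have := H; move/cvgryPgt => /(_ 0); apply: filterS => N /= hN.
  by rewrite invr_gt0.
apply/(cvgrVy Hp).
by apply: (cvg_trans _ H); apply: near_eq_cvg; apply: nearW => N /=; rewrite invrK.
Qed.


Definition t (x : R) : R^nat := (fun k : nat => (k.+1%:R)^-1 - (k.+1%:R + x)^-1).

Lemma harmE x : harm x = limn (series (t x)).
Proof. by []. Qed.

Lemma step y N : series (t (y+1)) N = series (t y) N + (1+y)^-1 - (N%:R+1+y)^-1.
Proof.
elim: N => [|N IH].
  by rewrite /series /= !big_geq // !add0r subrr.
rewrite !seriesSr IH /t.
have e1 : N.+1%:R + (y+1) = N.+1%:R + 1 + y by ring.
have e2 : N.+1%:R + y = N%:R + 1 + y by rewrite mulrS; ring.
rewrite e1 e2; ring.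
Qed.

Definition S (x : R) n := \sum_(j < n) (j%:R + 1 + x)^-1.
Definition E (x : R) n N := \sum_(j < n) (N%:R + (j%:R + 1 + x))^-1.

Lemma shiftF x n N : series (t (x + n%:R)) N = series (t x) N + S x n - E x n N.
Proof.
elim: n => [|n IH].
  by rewrite /S /E !big_ord0 subr0 !addr0.
have -> : x + n.+1%:R = (x + n%:R) + 1 by rewrite mulrS; ring.
rewrite step IH /S /E !big_ord_recr /=.
have e1 : 1 + (x + n%:R) = n%:R + 1 + x by ring.
have e2 : N%:R + 1 + (x + n%:R) = N%:R + (n%:R + 1 + x) by ring.
rewrite e1 e2; ring.
Qed.

Lemma Ecvg x n : E x n @ \oo --> 0.
Proof.
elim: n => [|n IH].
  rewrite /E; under eq_fun do rewrite big_ord0; exact: cvg_cst.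
have -> : E x n.+1 = (fun N => E x n N + (N%:R + (n%:R+1+x))^-1).
  by apply: funext => N; rewrite /E big_ord_recr.
rewrite -[0]addr0; apply: cvgD; first exact: IH.
exact: e0.
Qed.

Lemma shift_cvg x n : cvgn (series (t x)) ->
  series (t (x + n%:R)) @ \oo --> limn (series (t x)) + S x n - 0.
Proof.
move=> cx.
rewrite (funext (shiftF x n)).
apply: cvgB; last exact: Ecvg.
apply: cvgD => //; exact: cvg_cst.
Qed.

Lemma harm_shift x n : cvgn (series (t x)) -> harm (x + n%:R) = harm x + S x n.
Proof.
move=> cx; rewrite harmE (cvg_lim _ (@shift_cvg x n cx)) // subr0; reflexivity.
Qed.

Lemma cvg_up x n : cvgn (series (t x)) -> cvgn (series (t (x + n%:R))).
Proof. move=> cx; apply/cvg_ex; eexists; exact: shift_cvg. Qed.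

Lemma cvg_down x : cvgn (series (t (x + 1))) -> cvgn (series (t x)).
Proof.
move=> cx.
have -> : series (t x) = fun N => series (t (x + 1%:R)) N - S x 1 + E x 1 N.
  by apply: funext => N; rewrite shiftF; ring.
apply/cvg_ex; eexists; apply: cvgD; last exact: Ecvg.
apply: cvgB; last exact: cvg_cst.
exact: cx.
Qed.


Lemma t_half_ge0 k : 0 <= t 2^-1 k.
Proof.
have h0 : (0:R) <= k%:R by [].
rewrite /t subr_ge0 lef_pV2 ?posrE; rewrite -addn1 natrD; lra.
Qed.

Lemma t_half_le k : t 2^-1 k <= t (0 + 1) k.
Proof.
have h0 : (0:R) <= k%:R by [].
rewrite /t; apply: lerB => //.
rewrite lef_pV2 ?posrE; rewrite -addn1 natrD; lra.
Qed.

Lemma t0 k : t 0 k = 0.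
Proof. by rewrite /t addr0 subrr. Qed.

Lemma cvg_half : cvgn (series (t 2^-1)).
Proof.
apply: nondecreasing_is_cvgn.
  move=> m n mn; rewrite /series /=.
  by apply: (nondecreasing_series (P:=xpredT) (m:=0%N)) => // k _ _; exact: t_half_ge0.
exists 1 => _ [N _ <-].
apply: (le_trans (y := series (t (0+1)) N)).
  by rewrite /series /=; apply: ler_sum => k _; exact: t_half_le.
rewrite step.
have -> : series (t 0) N = 0.
  by rewrite /series /= big1 // => k _; exact: t0.
have h : 0 <= (N%:R + 1 + 0 : R)^-1 by rewrite invr_ge0 addr0; apply: addr_ge0.
rewrite add0r addr0 invr1; lra.
Qed.


Lemma cvg_x (p : nat) : cvgn (series (t (p%:R + 2^-1 - 1))).
Proof.
have c0 : cvgn (series (t (- 2^-1))).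
  apply: cvg_down; have -> : - 2^-1 + 1 = 2^-1 :> R by field.
  exact: cvg_half.
have := @cvg_up _ p c0.
by have -> : - 2^-1 + p%:R = p%:R + 2^-1 - 1 :> R by field.
Qed.

Lemma oddS n : oddH n.+1 = oddH n + (((2*n).+1)%:R)^-1 :> R.
Proof.
rewrite /oddH big_nat_recr //=.
by have -> : (2 * n.+1 - 1 = (2*n).+1)%N by lia.
Qed.

Lemma oddD (r p : nat) :
  oddH (r+p) - oddH p = \sum_(j < r) (((2*(p+j)).+1)%:R)^-1 :> R.
Proof.
elim: r => [|r IH]; first by rewrite add0n subrr big_ord0.
rewrite addSn oddS big_ord_recr /= -IH addnC; ring.
Qed.

Lemma Qrev (c : R) r :
  \prod_(i < r) (r%:R + c - 1 - i%:R) = \prod_(i < r) (c + i%:R).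
Proof.
elim: r => [|r IH]; first by rewrite !big_ord0.
rewrite big_ord_recl big_ord_recr /=.
under eq_bigr => i _ do
  have -> : r.+1%:R + c - 1 - (bump 0 i)%:R = r%:R + c - 1 - i%:R
    by rewrite /bump /= add1n !mulrS; ring.
rewrite IH mulrC; congr (_ * _); rewrite mulrS; ring.
Qed.

Lemma Qfact (p r : nat) :
  \prod_(i < r) (p%:R + 2^-1 + i%:R) * 2 ^+ (2 * r) * (2 * p)`!%:R * (r+p)`!%:R
  = (2 * (r + p))`!%:R * p`!%:R :> R.
Proof.
elim: r => [|r IH]; first by rewrite big_ord0 mul1r expr0 mul1r add0n mulnC.
have -> : (2 * (r.+1 + p) = (2 * (r + p)).+2)%N by lia.
rewrite big_ord_recr /= addSn (factS (r+p)) (factS (2*(r+p)).+1) (factS (2*(r+p))).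
have -> : (2 * r.+1 = (2 * r).+2)%N by lia.
transitivity ((2*(r+p)).+2%:R * (2*(r+p)).+1%:R * ((2*(r+p))`!%:R * p`!%:R) : R);
  last by rewrite !natrM; ring.
rewrite -IH !natrM !exprS.
have e1 : ((2 * (r + p)).+2%:R : R) = 2 * r%:R + 2 * p%:R + 2.
  by rewrite -addn2 natrD natrM natrD; ring.
have e2 : ((2 * (r + p)).+1%:R : R) = 2 * r%:R + 2 * p%:R + 1.
  by rewrite -addn1 natrD natrM natrD; ring.
have e3 : ((r + p).+1%:R : R) = r%:R + p%:R + 1.
  by rewrite -addn1 !natrD.
by rewrite e1 e2 e3; field.
Qed.


Lemma fnz n : (n`!%:R : R) != 0.
Proof. by rewrite pnatr_eq0 -lt0n fact_gt0. Qed.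

Lemma binR n m : (m <= n)%N -> ('C(n, m)%:R : R) = n`!%:R / (m`!%:R * (n - m)`!%:R).
Proof.
move=> mn; rewrite -(bin_fact mn) !natrM.
have := fnz m; have := fnz (n - m); move=> h1 h2; field.
by rewrite h1 h2.
Qed.

Lemma mainR (p r : nat) :
  hyperH r (p%:R + 2^-1 : R) =
  ((2 : R) ^ (2 * r%:Z - 1))^-1 * ('C(2 * p, p)%:R)^-1
    * 'C(2 * (r + p), r + p)%:R * 'C(r + p, r)%:R
    * (oddH (r + p) - oddH p).
Proof.
rewrite /hyperH /gbinom Qrev.
set x := p%:R + 2^-1 - 1.
have -> : r%:R + (p%:R + 2^-1) - 1 = x + r%:R by rewrite /x; ring.
rewrite harm_shift; last exact: cvg_x.
have -> : harm x + S x r - harm x = S x r by ring.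
have HS : S x r = 2 * (oddH (r+p) - oddH p).
  rewrite oddD /S mulr_sumr; apply: eq_bigr => j _; rewrite /x.
  have e : ((2*(p+j)).+1%:R : R) = 2 * p%:R + 2 * j%:R + 1.
    by rewrite -addn1 natrD natrM natrD; ring.
  rewrite e.
  have hp : (0:R) <= p%:R by [].
  have hj : (0:R) <= j%:R by [].
  field; apply: lt0r_neq0; lra.
rewrite HS.
have HE : (2:R) ^ (2 * r%:Z - 1) = 2 ^+ (2 * r) / 2.
  have -> : (2 * r%:Z - 1 = (2 * r)%N%:Z + (-1))%R by rewrite PoszM.
  by rewrite expfzDr // exprN1.
have HQ : \prod_(i < r) (p%:R + 2^-1 + i%:R) =
   (2 * (r + p))`!%:R * p`!%:R / (2 ^+ (2 * r) * (2 * p)`!%:R * (r + p)`!%:R) :> R.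
  rewrite -Qfact; have := fnz (2 * p); have := fnz (r + p); move=> h1 h2.
  by field; rewrite h1 h2 /= expf_neq0.
have l1 : (p <= 2 * p)%N by lia.
have l2 : (r + p <= 2 * (r + p))%N by lia.
have l3 : (r <= r + p)%N by lia.
rewrite HE HQ (@binR _ _ l1) (@binR _ _ l2) (@binR _ _ l3).
have -> : (2 * p - p = p)%N by lia.
have -> : (2 * (r + p) - (r + p) = r + p)%N by lia.
have -> : (r + p - r = p)%N by lia.
have := fnz (2 * p); have := fnz (r + p); have := fnz p; have := fnz r;
have := fnz (2 * (r + p)); move=> h1 h2 h3 h4 h5.
by field; rewrite h2 h3 h4 h5 /= expf_neq0.
Qed.

End S.

Theorem lemma6 (R : realType) (p r : nat) :
  hyperH r (p%:R + 2^-1 : R) =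
  ((2 : R) ^ (2 * r%:Z - 1))^-1 * ('C(2 * p, p)%:R)^-1
    * 'C(2 * (r + p), r + p)%:R * 'C(r + p, r)%:R
    * (oddH (r + p) - oddH p).
Proof. exact: mainR. Qed.
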